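(* Let $K$ be a field, $n\ge2$, regard $M_n(K)$ as a left $M_n(K)$-module via left multiplication, and for $X\in M_n(K)$ let $H_X=\{A\in M_n(K): \operatorname{Tr}(AX)=0\}$. Then for every $X\in M_n(K)$ and every choice of $\vartheta$: (i) if $\operatorname{char}K=0$ or $\operatorname{char}K=p>n$, then \[ \sigma_\vartheta(H_X)=\{Y\in M_n(K): YX=0\},\qquad \tau_\vartheta(H_X)=\{Y\in M_n(K): YX=0\ \text{or}\ YX=\lambda I_n\text{ for some }\lambda\in K\setminus\{0\}\}; \] (ii) if $\operatorname{char}K=p>0$ with $p\le n$, then $\sigma_\vartheta(H_X)=\tau_\vartheta(H_X)=\{Y\in M_n(K): YX=0\}$.
   Context: $I_n$ is the identity matrix and $\operatorname{Tr}$ the trace. For an associative unital algebra $\mathcal A$ over a field $K$, the symbol $\vartheta$ ranges over ''left'', ''right'', ''pre-two-sided'', ''two-sided''. A subspace $J\subseteq\mathcal A$ is a left (resp. right; two-sided) Mathieu subspace of $\mathcal A$ if whenever $a\in\mathcal A$ satisfies $a^m\in J$ for all $m\ge1$, then for all $b,c\in\mathcal A$ there is $N_0$ with $ba^m\in J$ (resp. $a^mc\in J$; $ba^mc\in J$) for all $m\ge N_0$; pre-two-sided means both left and right. A $\vartheta$-ideal means a left/right/two-sided ideal accordingly, and a two-sided ideal for $\vartheta$ = pre-two-sided. For a left $\mathcal A$-module $\mathcal M$, $u\in\mathcal M$, $N\subseteq \mathcal M$, $(N:u)=\{a\in\mathcal A: au\in N\}$; for a subspace $N$, $\sigma_\vartheta(N)=\{u\in\mathcal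 M: (N:u)\text{ is a }\vartheta\text{-ideal of }\mathcal A\}$, $\tau_\vartheta(N)=\{u\in\mathcal M: (N:u)\text{ is a }\vartheta\text{-Mathieu subspace of }\mathcal A\}$. *)

(* Defs.v *)
From HB Require Import structures.
From mathcomp Require Import all_boot all_order all_algebra.
Set Implicit Arguments. Unset Strict Implicit. Unset Printing Implicit Defensive.
Import GRing.Theory.
Local Open Scope ring_scope.

Inductive theta := Left | Right | PreTwoSided | TwoSided.

Definition is_left_ideal (A : pzRingType) (J : A -> Prop) : Prop :=
  J 0 /\ (forall x y, J x -> J y -> J (x + y)) /\ (forall b x, J x -> J (b * x)).
Definition is_right_ideal (A : pzRingType) (J : A -> Prop) : Prop :=
  J 0 /\ (forall x y, J x -> J y -> J (x + y)) /\ (forall c x, J x -> J (x * c)).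
Definition is_twosided_ideal (A : pzRingType) (J : A -> Prop) : Prop :=
  is_left_ideal J /\ is_right_ideal J.

Definition is_theta_ideal (th : theta) (A : pzRingType) (J : A -> Prop) : Prop :=
  match th with
  | Left => is_left_ideal J
  | Right => is_right_ideal J
  | PreTwoSided | TwoSided => is_twosided_ideal J
  end.

Definition is_left_Mathieu (A : pzRingType) (J : A -> Prop) : Prop :=
  forall a : A, (forall m : nat, (1 <= m)%N -> J (a ^+ m)) ->
    forall b : A, exists N0 : nat, forall m : nat, (N0 <= m)%N -> J (b * a ^+ m).
Definition is_right_Mathieu (A : pzRingType) (J : A -> Prop) : Prop :=
  forall a : A, (forall m : nat, (1 <= m)%N -> J (a ^+ m)) ->
    forall c : A, exists N0 : nat, forall m : nat, (N0 <= m)%N -> J (a ^+ m * c).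
Definition is_twosided_Mathieu (A : pzRingType) (J : A -> Prop) : Prop :=
  forall a : A, (forall m : nat, (1 <= m)%N -> J (a ^+ m)) ->
    forall b c : A, exists N0 : nat, forall m : nat, (N0 <= m)%N -> J (b * a ^+ m * c).

Definition is_theta_Mathieu (th : theta) (A : pzRingType) (J : A -> Prop) : Prop :=
  match th with
  | Left => is_left_Mathieu J
  | Right => is_right_Mathieu J
  | PreTwoSided => is_left_Mathieu J /\ is_right_Mathieu J
  | TwoSided => is_twosided_Mathieu J
  end.

(* The algebra A regarded as a left A-module via left multiplication:
   (N : u) = { a | a u \in N }. *)
Definition colon (A : pzRingType) (N : A -> Prop) (u : A) : A -> Prop :=
  fun a => N (a * u).

Definition sigma_theta (th : theta) (A : pzRingType) (N : A -> Prop) : A -> Prop :=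
  fun u => is_theta_ideal th (colon N u).
Definition tau_theta (th : theta) (A : pzRingType) (N : A -> Prop) : A -> Prop :=
  fun u => is_theta_Mathieu th (colon N u).

Definition H_ (K : fieldType) (n : nat) (X : 'M[K]_n.+1) : 'M[K]_n.+1 -> Prop :=
  fun A => \tr (A * X) = 0.

(* Main.v *)
Require Import Defs.
From Stdlib Require Import FunctionalExtensionality.
From HB Require Import structures.
From mathcomp Require Import all_boot all_order all_algebra.
Set Implicit Arguments. Unset Strict Implicit. Unset Printing Implicit Defensive.
Import GRing.Theory.
Local Open Scope ring_scope.

Lemma tr_delta_mul (K : fieldType) (m : nat) (i j : 'I_m.+1) (W : 'M[K]_m.+1) :
  \tr (delta_mx j i * W) = W i j.
Proof.
rewrite /mxtrace (bigD1 j) //= big1 => [|k kj].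
  rewrite !mxE (bigD1 i) //= big1 => [|l li]; first by rewrite !mxE !eqxx mul1r !addr0.
  by rewrite mxE eqxx (negbTE li) mul0r.
rewrite !mxE big1 // => l _; rewrite mxE (negbTE kj) mul0r //.
Qed.

Lemma tr_nondeg_l (K : fieldType) (m : nat) (W : 'M[K]_m.+1) :
  (forall b, \tr (b * W) = 0) -> W = 0.
Proof. by move=> H; apply/matrixP => i j; rewrite -tr_delta_mul H mxE. Qed.

Lemma tr_nondeg_r (K : fieldType) (m : nat) (W : 'M[K]_m.+1) :
  (forall b, \tr (W * b) = 0) -> W = 0.
Proof. move=> H; apply: tr_nondeg_l => b; rewrite -mulmxE mxtrace_mulC mulmxE; exact: H. Qed.
Lemma tr_pid (K : fieldType) (m r : nat) : (r <= m.+1)%N ->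
  \tr (pid_mx r : 'M[K]_m.+1) = r%:R.
Proof.
move=> le_r.
rewrite /mxtrace (eq_bigr (fun i : 'I_m.+1 => ((i < r)%N)%:R)); last first.
  by move=> i _; rewrite mxE eqxx.
rewrite -(big_mkord xpredT (fun i => ((i < r)%N)%:R : K)) (big_cat_nat (leq0n r) le_r) /=.
have -> : \sum_(r <= i < m.+1) ((i < r)%N)%:R = 0 :> K.
  by rewrite big_nat_cond big1 // => i /andP[/andP[ri _] _]; rewrite ltnNge ri.
rewrite addr0 big_nat_cond (eq_bigr (fun _ => 1)); last by move=> i /andP[/andP[_ ->]].
by rewrite -big_nat_cond sumr_const_nat subn0.
Qed.

Lemma idem_tr0 (K : fieldType) (m : nat) (F : 'M[K]_m.+1) :
  (forall k, (0 < k <= m.+1)%N -> (k%:R : K) != 0) ->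
  F * F = F -> \tr F = 0 -> F = 0.
Proof.
move=> Hc FF trF.
have eb := mulmx_ebase F.
set L := col_ebase F in eb; set U := row_ebase F in eb; set r := \rank F in eb.
have Lu : L \in unitmx by apply: col_ebase_unit.
have Uu : U \in unitmx by apply: row_ebase_unit.
have le_r : (r <= m.+1)%N by apply: rank_leq_row.
have [r0|rpos] := posnP r.
  by rewrite -eb r0 pid_mx_0 mulmx0 mul0mx.
set P := (pid_mx r : 'M[K]_m.+1) in eb.
have PP : P *m P = P by apply: pid_mx_id.
have key : P *m (U *m L) *m P = P.
  have : L *m P *m U *m (L *m P *m U) = L *m P *m U by rewrite eb mulmxE FF.
  rewrite !mulmxA => h.
  have := congr1 (fun M => invmx L *m M *m invmx U) h.
  by rewrite /= !mulmxA !mulmxK // !mulVmx // !mul1mx.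
have : \tr F = r%:R.
  rewrite -eb -mulmxA mxtrace_mulC -mulmxA -[in LHS]PP -mulmxA mxtrace_mulC.
  by rewrite !mulmxA -(mulmxA P) key tr_pid.
rewrite trF => /esym/eqP; apply/contraTeq => _.
by apply: Hc; rewrite rpos.
Qed.
Lemma tr_horner (K : fieldType) (m : nat) (a : 'M[K]_m.+1) (f : {poly K}) :
  (forall j, (0 < j)%N -> \tr (a ^+ j) = 0) ->
  \tr (horner_mx a f) = f`_0 * m.+1%:R.
Proof.
move=> Ht.
rewrite -[f in horner_mx _ f]coefK poly_def rmorph_sum raddf_sum /=.
have E : forall i : 'I_(size f), \tr (horner_mx a (f`_i *: 'X^i)) = f`_i * \tr (a ^+ i).
  by move=> i; rewrite linearZ /= rmorphXn /= horner_mx_X mxtraceZ.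
rewrite (eq_bigr _ (fun i _ => E i)).
rewrite -(big_mkord xpredT (fun i => f`_i * \tr (a ^+ i))).
case Hs: (size f) => [|s]; first by rewrite big_geq // nth_default ?mul0r ?Hs.
rewrite big_nat_recl // big1 ?addr0 ?expr0 ?mxtrace1 //.
by move=> i _; rewrite Ht ?mulr0.
Qed.

Lemma comm4 (R : comNzRingType) (a c b d : R) : b * d * (a * c) = a * b * (c * d).
Proof. by rewrite mulrACA [b * a]mulrC [d * c]mulrC. Qed.

Lemma nilp_tr (K : fieldType) (m : nat) (a : 'M[K]_m.+1) :
  (forall k, (0 < k <= m.+1)%N -> (k%:R : K) != 0) ->
  (forall j, (0 < j)%N -> \tr (a ^+ j) = 0) ->
  exists N, a ^+ N = 0.
Proof.
move=> Hc Ht.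
have nzn : (m.+1%:R : K) != 0 by apply: Hc; rewrite leqnn.
set p := char_poly a.
have CH : horner_mx a p = 0 by apply: Cayley_Hamilton.
have pnz : p != 0 by apply: monic_neq0; apply: char_poly_monic.
have [k [q nrq Dp]] := multiplicity_XsubC p 0.
rewrite pnz /= polyC0 subr0 in nrq Dp.
case: k Dp => [|k] Dp.
  have := tr_horner p Ht; rewrite CH mxtrace0 -horner_coef0 => /esym/eqP.
  by rewrite mulf_eq0 (negbTE nzn) orbF Dp expr0 mulr1 -rootE (negbTE nrq).
have cop : coprimep q ('X^(k.+1)) by apply: coprimep_expr; rewrite -(subr0 'X) -polyC0 coprimep_XsubC.
have [[u1 u2] /= Hb] := Bezout_eq1_coprimepP _ _ cop.
set E := horner_mx a (u1 * q); set F := horner_mx a (u2 * 'X^(k.+1)).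
have EF1 : E + F = 1 by rewrite /E /F -rmorphD /= Hb rmorph1.
have FE0 : F * E = 0.
  rewrite /E /F -rmorphM /= (comm4 u1 q u2) -Dp.
  by rewrite rmorphM /= CH mulr0.
have FF : F * F = F by have := congr1 (fun M => F * M) EF1; rewrite /= mulrDr FE0 add0r mulr1.
have trF : \tr F = 0.
  by rewrite tr_horner // coefMXn /= mul0r.
have F0 := idem_tr0 Hc FF trF.
exists k.+1.
have -> : a ^+ k.+1 = horner_mx a ('X^(k.+1)) by rewrite rmorphXn /= horner_mx_X.
rewrite -[horner_mx a _]mulr1 -EF1 F0 addr0 /E -rmorphM /= mulrC -mulrA -Dp.
by rewrite rmorphM /= CH mulr0.
Qed.
Lemma r1_entry (K : fieldType) (m : nat) (u : 'cV[K]_m.+1) (v : 'rV[K]_m.+1) k l :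
  (u *m v) k l = u k 0 * v 0 l.
Proof. by rewrite mxE big_ord1. Qed.

Lemma r1_props (K : fieldType) (m : nat) (u : 'cV[K]_m.+1) (w : 'rV[K]_m.+1)
  (Z : 'M[K]_m.+1) : w *m u = 1%:M ->
  [/\ (u *m w) * (u *m w) = u *m w,
      \tr ((u *m w) * Z) = (w *m Z *m u) 0 0 &
      forall k l, ((u *m w) * Z) k l = u k 0 * (w *m Z) 0 l].
Proof.
move=> wu; split.
- by rewrite -mulmxE mulmxA -(mulmxA u) wu mulmx1.
- by rewrite -mulmxE -mulmxA mxtrace_mulC trace_mx11.
- by move=> k l; rewrite -mulmxE -mulmxA r1_entry.
Qed.

Lemma delta11 (K : fieldType) : delta_mx 0 0 = 1%:M :> 'M[K]_1.
Proof. by apply/matrixP => a b; rewrite !ord1 !mxE. Qed.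

Lemma exist_idem (K : fieldType) (m : nat) (Z : 'M[K]_m.+1) :
  Z != 0 -> (forall c, Z != c%:M) ->
  exists e : 'M[K]_m.+1, [/\ e * e = e, \tr (e * Z) = 0 & e * Z != 0].
Proof.
move=> Znz Zns.
have [trZ|trZ] := eqVneq (\tr Z) 0.
  by exists 1; rewrite mulr1 !mul1r.
have [[i j] /andP[ij Zij]|nod] := pickP (fun ij : 'I_m.+1 * 'I_m.+1 => (ij.1 != ij.2) && (Z ij.1 ij.2 != 0)).
  simpl in ij, Zij.
  set c := Z i i / Z i j.
  set u : 'cV[K]_m.+1 := delta_mx i 0 - c *: delta_mx j 0.
  set w : 'rV[K]_m.+1 := delta_mx 0 i.
  have wu : w *m u = 1%:M.
    by rewrite /w /u mulmxBr -scalemxAr !mul_delta_mx_cond eqxx (negbTE ij) mulr0n scaler0 subr0 mulr1n delta11.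
  have [H1 H2 H3] := r1_props Z wu.
  exists (u *m w); split => //.
    rewrite H2 /w -rowE /u mulmxBr -scalemxAr -!colE !mxE /c divfK //.
    by rewrite subrr.
  apply/negP => /eqP/matrixP/(_ i j); rewrite H3 /w -rowE /u !mxE !eqxx (negbTE ij) /=.
  by rewrite mulr0 subr0 mul1r; apply/eqP.
have diagZ : forall i j, i != j -> Z i j = 0.
  by move=> i j ij; have := nod (i, j); rewrite /= ij /= => /negbFE/eqP.
have [i Zi] : exists i, Z i i != Z 0 0.
  apply/existsP; apply: contraR (Zns (Z 0 0)) => /existsPn H.
  apply/eqP/matrixP => k l; rewrite mxE.
  case: (eqVneq k l) => [<-|kl]; first by rewrite mulr1n; apply/eqP; move: (H k); rewrite negbK.
  by rewrite (diagZ k l kl).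
set j : 'I_m.+1 := 0.
have ij : i != j by apply: contraNneq Zi => ->.
set d := Z j j - Z i i.
have dnz : d != 0 by rewrite subr_eq0 eq_sym.
set a := Z j j / d; set b := - (Z i i / d).
set u : 'cV[K]_m.+1 := a *: delta_mx i 0 + b *: delta_mx j 0.
set w : 'rV[K]_m.+1 := delta_mx 0 i + delta_mx 0 j.
have ab : a + b = 1 by rewrite /a /b -mulrBl divff.
have wu : w *m u = 1%:M.
  rewrite /w /u mulmxDr !mulmxDl -!scalemxAr !mul_delta_mx_cond !eqxx (negbTE ij) eq_sym (negbTE ij).
  by rewrite !mulr0n !mulr1n !scaler0 addr0 add0r -scalerDl ab scale1r delta11.
have [H1 H2 H3] := r1_props Z wu.
exists (u *m w); split => //.
  rewrite H2 /w mulmxDl -!rowE /u !mulmxDr -!scalemxAr -!colE !mxE.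
  rewrite (diagZ j i) 1?eq_sym // (diagZ i j) // !addr0 add0r /a /b.
  by rewrite mulNr mulrAC (mulrAC (Z i i)) (mulrC (Z i i)) subrr.
apply/negP => /eqP/matrixP => H.
have := H i j; have := H j i.
rewrite !H3 /w mulmxDl -!rowE /u !mxE !eqxx /= eq_sym (negbTE ij) /=.
rewrite (diagZ j i) 1?eq_sym // (diagZ i j) // !mulr0 !mulr1 !add0r !addr0 /a /b.
move/eqP; rewrite mulf_eq0 oppr_eq0 mulf_eq0 invr_eq0 (negbTE dnz) orbF orbb => /eqP Zii.
move/eqP; rewrite mulf_eq0 mulf_eq0 invr_eq0 (negbTE dnz) orbF orbb => /eqP Zjj.
by move: dnz; rewrite /d Zii Zjj subrr eqxx.
Qed.

Lemma colon_H (K : fieldType) (m : nat) (X Y : 'M[K]_m.+1) :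
  colon (H_ X) Y = H_ (Y * X).
Proof. by apply: functional_extensionality => a; rewrite /colon /H_ mulrA. Qed.

Lemma ideal_mathieu (A : pzRingType) th (J : A -> Prop) :
  is_theta_ideal th J -> is_theta_Mathieu th J.
Proof.
have L : is_left_ideal J -> is_left_Mathieu J.
  move=> [_ [_ HL]] a Ha b; exists 1%N => k k1; apply: HL; exact: Ha.
have R : is_right_ideal J -> is_right_Mathieu J.
  move=> [_ [_ HR]] a Ha c; exists 1%N => k k1; apply: HR; exact: Ha.
case: th => /=; [exact: L | exact: R | by move=> [/L ? /R ?] |].
move=> [[_ [_ HL]] [_ [_ HR]]] a Ha b c; exists 1%N => k k1.
by apply: HR; apply: HL; apply: Ha.
Qed.

Lemma H0_ideal (K : fieldType) (m : nat) th : is_theta_ideal th (H_ (0 : 'M[K]_m.+1)).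
Proof.
have T : forall a : 'M[K]_m.+1, H_ 0 a by move=> a; rewrite /H_ mulr0 mxtrace0.
have L : is_left_ideal (H_ (0 : 'M[K]_m.+1)) by split; [|split] => *; apply: T.
have R : is_right_ideal (H_ (0 : 'M[K]_m.+1)) by split; [|split] => *; apply: T.
by case: th => //=; split.
Qed.

Lemma ideal_ann (K : fieldType) (m : nat) th (Z : 'M[K]_m.+1) :
  is_theta_ideal th (H_ Z) -> forall A, H_ Z A -> A * Z = 0 \/ Z * A = 0.
Proof.
have L : is_left_ideal (H_ Z) -> forall A, H_ Z A -> A * Z = 0.
  move=> [_ [_ HL]] A HA; apply: tr_nondeg_l => b; rewrite mulrA; exact: HL.
have R : is_right_ideal (H_ Z) -> forall A, H_ Z A -> Z * A = 0.
  move=> [_ [_ HR]] A HA; apply: tr_nondeg_l => b.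
  have := HR b A HA; rewrite /H_ -mulrA -!mulmxE mxtrace_mulC !mulmxE -mulrA.
  by rewrite -mulmxE mxtrace_mulC mulmxE.
case: th => /= [H|H|[H _]|[H _]] A HA; by [left; apply: L | right; apply: R].
Qed.

Lemma idem_exp (K : fieldType) (m : nat) (e : 'M[K]_m.+1) k :
  e * e = e -> (0 < k)%N -> e ^+ k = e.
Proof.
move=> ee; elim: k => // [[|k]] IH _; first by rewrite expr1.
by rewrite exprS IH.
Qed.

Lemma mathieu_idem (K : fieldType) (m : nat) th (Z e : 'M[K]_m.+1) :
  is_theta_Mathieu th (H_ Z) -> e * e = e -> \tr (e * Z) = 0 ->
  (th <> Right -> e * Z = 0) /\ (th = Right -> Z * e = 0).
Proof.
move=> HM ee tr0.
have He : forall k, (1 <= k)%N -> H_ Z (e ^+ k) by move=> k k1; rewrite /H_ idem_exp.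
have L : is_left_Mathieu (H_ Z) -> e * Z = 0.
  move=> HL; apply: tr_nondeg_l => b; have [N0 HN] := HL e He b.
  have := HN (maxn N0 1) (leq_maxl _ _); rewrite /H_ idem_exp ?leq_max ?orbT //.
  by rewrite mulrA.
have R : is_right_Mathieu (H_ Z) -> Z * e = 0.
  move=> HR; apply: tr_nondeg_l => c; have [N0 HN] := HR e He c.
  have := HN (maxn N0 1) (leq_maxl _ _); rewrite /H_ idem_exp ?leq_max ?orbT //.
  rewrite -mulrA -!mulmxE mxtrace_mulC !mulmxE -mulrA.
  by rewrite -mulmxE mxtrace_mulC mulmxE.
case: th HM => /= HM; split=> // _.
- exact: L.
- exact: R.
- exact: L (proj1 HM).
- apply: tr_nondeg_l => b; have [N0 HN] := HM e He b 1.
  have := HN (maxn N0 1) (leq_maxl _ _); rewrite /H_ idem_exp ?leq_max ?orbT //.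
  by rewrite mulr1 mulrA.
Qed.

Lemma mathieu_class (K : fieldType) (m : nat) th (Z : 'M[K]_m.+1) :
  is_theta_Mathieu th (H_ Z) -> Z = 0 \/ exists l : K, l != 0 /\ Z = l%:M.
Proof.
move=> HM.
have [->|Znz] := eqVneq Z 0; first by left.
right.
have [/is_scalar_mxP [c Zc]|Zns] := boolP (is_scalar_mx Z).
  exists c; split => //; apply: contraNneq Znz => c0; by rewrite Zc c0 raddf0.
have Zns' : forall c, Z != c%:M.
  by move=> c; apply: contraNneq Zns => ->; apply/is_scalar_mxP; exists c.
exfalso.
have [thR|thR] : th = Right \/ th <> Right by case: (th); [right|left|right|right].
  have ZTnz : Z^T != 0 by apply/eqP => h; move/eqP: Znz; apply; apply: trmx_inj; rewrite h trmx0.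
  have ZTns : forall c, Z^T != c%:M.
    move=> c; apply: contraNneq (Zns' c) => h; by rewrite -[Z]trmxK h tr_scalar_mx.
  have [e' [ee tr0 nz]] := exist_idem ZTnz ZTns.
  have ee2 : e'^T * e'^T = e'^T by rewrite -mulmxE -trmx_mul mulmxE ee.
  have tr2 : \tr (e'^T * Z) = 0.
    by rewrite -mxtrace_tr -mulmxE trmx_mul trmxK mxtrace_mulC mulmxE.
  have := (proj2 (mathieu_idem HM ee2 tr2)) thR.
  move/(congr1 trmx); rewrite -mulmxE trmx_mul trmxK trmx0 mulmxE => h.
  by move: nz; rewrite h eqxx.
have [e [ee tr0 nz]] := exist_idem Znz Zns'.
have := (proj1 (mathieu_idem HM ee tr0)); move/(_ thR) => h.
by move: nz; rewrite h eqxx.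
Qed.

Lemma scalar_not_ideal (K : fieldType) (m : nat) th (l : K) : (1 <= m)%N -> l != 0 ->
  ~ is_theta_ideal th (H_ (l%:M : 'M[K]_m.+1)).
Proof.
move=> m1 l0 HI.
set i1 : 'I_m.+1 := inord 1.
have i1v : (i1 : nat) = 1%N by rewrite inordK.
set A : 'M[K]_m.+1 := delta_mx 0 i1.
have HA : H_ l%:M A by rewrite /H_ tr_delta_mul mxE -(inj_eq val_inj) /= i1v mulr0n.
have AZ : A * l%:M = l *: A by rewrite -mulmxE mul_mx_scalar.
have ZA : l%:M * A = l *: A by rewrite -mulmxE mul_scalar_mx.
have Anz : l *: A != 0.
  apply/negP => /eqP/matrixP/(_ 0 i1); rewrite !mxE !eqxx mulr1 => /eqP.
  by rewrite (negbTE l0).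
by case: (ideal_ann HI HA); rewrite ?AZ ?ZA => h; move: Anz; rewrite h eqxx.
Qed.

Lemma scalar_not_mathieu_p (K : fieldType) (m : nat) th (l : K) (p : nat) :
  p \in [pchar K] -> (p <= m.+1)%N -> l != 0 ->
  ~ is_theta_Mathieu th (H_ (l%:M : 'M[K]_m.+1)).
Proof.
move=> pc le_p l0 HM.
have p0 : (0 < p)%N by apply: prime_gt0; apply: pcharf_prime pc.
set e : 'M[K]_m.+1 := pid_mx p.
have ee : e * e = e by rewrite -mulmxE pid_mx_id.
have eZ : e * l%:M = l *: e by rewrite -mulmxE mul_mx_scalar.
have Ze : l%:M * e = l *: e by rewrite -mulmxE mul_scalar_mx.
have tr0 : \tr (e * l%:M) = 0 by rewrite eZ mxtraceZ tr_pid // pcharf0 // mulr0.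
have enz : l *: e != 0.
  apply/negP => /eqP/matrixP/(_ 0 0); rewrite !mxE eqxx p0 /= mulr1 => /eqP.
  by rewrite (negbTE l0).
have [H1 H2] := mathieu_idem HM ee tr0.
have [thR|thR] : th = Right \/ th <> Right by case: (th); [right|left|right|right].
  by move: enz; rewrite -Ze H2 ?eqxx.
by move: enz; rewrite -eZ H1 ?eqxx.
Qed.

Lemma scalar_mathieu (K : fieldType) (m : nat) th (l : K) :
  (forall k, (0 < k <= m.+1)%N -> (k%:R : K) != 0) -> l != 0 ->
  is_theta_Mathieu th (H_ (l%:M : 'M[K]_m.+1)).
Proof.
move=> Hc l0.
have key : forall a : 'M[K]_m.+1, (forall k, (1 <= k)%N -> H_ l%:M (a ^+ k)) ->
    exists N, forall k, (N <= k)%N -> a ^+ k = 0.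
  move=> a Ha.
  have Ht : forall j, (0 < j)%N -> \tr (a ^+ j) = 0.
    move=> j j0; have := Ha j j0; rewrite /H_ -mulmxE mul_mx_scalar mxtraceZ.
    by move/eqP; rewrite mulf_eq0 (negbTE l0) /= => /eqP.
  have [N aN] := nilp_tr Hc Ht.
  by exists N => k kN; rewrite -(subnKC kN) exprD aN mul0r.
have T : forall x : 'M[K]_m.+1, x = 0 -> H_ l%:M x by move=> x ->; rewrite /H_ mul0r mxtrace0.
case: th => /=.
- by move=> a Ha b; have [N HN] := key a Ha; exists N => k kN; apply: T; rewrite HN ?mulr0.
- by move=> a Ha c; have [N HN] := key a Ha; exists N => k kN; apply: T; rewrite HN ?mul0r.
- split.
  + by move=> a Ha b; have [N HN] := key a Ha; exists N => k kN; apply: T; rewrite HN ?mulr0.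
  + by move=> a Ha c; have [N HN] := key a Ha; exists N => k kN; apply: T; rewrite HN ?mul0r.
- by move=> a Ha b c; have [N HN] := key a Ha; exists N => k kN; apply: T; rewrite HN ?mulr0 ?mul0r.
Qed.

Theorem proposition5p4 (K : fieldType) (n : nat) (hn : (2 <= n)%N)
    (X : 'M[K]_n.-1.+1) (th : theta) :
  ((forall p : nat, p \in [pchar K] -> (n < p)%N) ->
     (forall Y : 'M[K]_n.-1.+1, sigma_theta th (H_ X) Y <-> Y * X = 0) /\
     (forall Y : 'M[K]_n.-1.+1, tau_theta th (H_ X) Y <->
        (Y * X = 0 \/ exists lambda : K, lambda != 0 /\ Y * X = lambda%:M)))
  /\
  ((exists p : nat, p \in [pchar K] /\ (p <= n)%N) ->
     (forall Y : 'M[K]_n.-1.+1, sigma_theta th (H_ X) Y <-> Y * X = 0) /\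
     (forall Y : 'M[K]_n.-1.+1, tau_theta th (H_ X) Y <-> Y * X = 0)).
Proof.
have hn' : n = n.-1.+1 by rewrite prednK // ltnW.
have m1 : (1 <= n.-1)%N by rewrite -ltnS -hn'.
have sig : forall Y : 'M[K]_n.-1.+1, sigma_theta th (H_ X) Y <-> Y * X = 0.
  move=> Y; rewrite /sigma_theta colon_H; split; last by move=> ->; apply: H0_ideal.
  move=> HI; case: (mathieu_class (ideal_mathieu HI)) => // [[l [l0 E]]].
  by rewrite E in HI; case: (scalar_not_ideal m1 l0 HI).
split=> [Hp|[p [pc le_p]]]; split=> // Y; rewrite /tau_theta colon_H.
  split; first by apply: mathieu_class.
  case=> [->|[l [l0 ->]]]; first by apply: ideal_mathieu; apply: H0_ideal.
  apply: scalar_mathieu l0 => k /andP[k0 kn]; apply/negP => /eqP kz.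
  have [p pc] := natf0_pchar k0 (introT eqP kz).
  have := Hp p pc; rewrite ltnNge => /negP; apply.
  apply: leq_trans (_ : (k <= n)%N); last by rewrite hn'.
  by apply: dvdn_leq k0 _; rewrite (dvdn_pcharf pc) kz.
split; last by move=> ->; apply: ideal_mathieu; apply: H0_ideal.
move=> HM; case: (mathieu_class HM) => // [[l [l0 E]]].
rewrite E in HM; case: (scalar_not_mathieu_p pc _ l0 HM); by rewrite -hn'.
Qed.
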